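(* Let $(X,d)$ be a compact metric space, $\omega:\Lambda\times X\to X$ an $\eta$-expansive IFS, and $\sigma=(\lambda_1,\lambda_2,\dots)\in\Lambda^{\mathbb N}$. Then for every $\mu>0$ there exists $N>0$ such that if $x,y\in X$ satisfy $d(\omega_{\sigma_n}(x),\omega_{\sigma_n}(y))\le\eta$ for all $n\le N$, then $d(x,y)<\mu$.
   Context: An IFS is given by a compact metric space $\Lambda$ and a continuous map $\omega:\Lambda\times X\to X$; $\omega_\lambda=\omega(\lambda,\cdot)$. For $\sigma=(\lambda_1,\lambda_2,\dots)$, $\omega_{\sigma_0}=\mathrm{id}$, $\omega_{\sigma_k}=\omega_{\lambda_k}\circ\cdots\circ\omega_{\lambda_1}$. $\eta$-expansive: for every $\sigma\in\Lambda^{\mathbb N}$, if $x,y\in X$ satisfy $d(\omega_{\sigma_n}(x),\omega_{\sigma_n}(y))\le\eta$ for all $n\in\mathbb N$, then $x=y$. *)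

(* Defs.v *)
From HB Require Import structures.
From mathcomp Require Import all_boot all_order all_algebra.
From mathcomp Require Import all_classical all_reals all_analysis.
Set Implicit Arguments. Unset Strict Implicit. Unset Printing Implicit Defensive.
Import Order.TTheory GRing.Theory Num.Theory.
Local Open Scope classical_set_scope.
Local Open Scope ring_scope.

(* The sequence sigma = (lambda_1, lambda_2, ...) is encoded as
   sig : nat -> Lambda with lambda_{k+1} = sig k.
   omega_seq omega sig n = omega_{sigma_n}
     = omega_{lambda_n} o ... o omega_{lambda_1}, omega_seq _ _ 0 = id. *)
Fixpoint omega_seq {L X : Type} (omega : L -> X -> X) (sig : nat -> L) (n : nat)
  : X -> X :=
  match n with
  | 0 => id
  | n.+1 => fun x => omega (sig n) (omega_seq omega sig n x)
  end.

Definition IFS {R : realType} {L X : metricType R} (omega : L -> X -> X) : Prop :=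
  compact [set: L] /\ continuous (fun p : L * X => omega p.1 p.2).

Definition expansive {R : realType} {L X : metricType R}
  (omega : L -> X -> X) (eta : R) : Prop :=
  forall (sig : nat -> L) (x y : X),
    (forall n : nat, mdist (omega_seq omega sig n x) (omega_seq omega sig n y) <= eta) ->
    x = y.

(* Main.v *)
Require Import Defs.
From HB Require Import structures.
From mathcomp Require Import all_boot all_order all_algebra.
From mathcomp Require Import all_classical all_reals all_analysis.
From mathcomp Require Import lra.
Import Order.TTheory GRing.Theory Num.Theory.
Local Open Scope classical_set_scope.
Local Open Scope ring_scope.

Lemma cluster_dist_le (R : realType) (X : metricType R) (T : topologicalType)
  (F : set_system T) (c : T) (f g : T -> X) (r : R) :
  cluster F c -> {for c, continuous f} -> {for c, continuous g} ->
  F [set t | mdist (f t) (g t) <= r] -> mdist (f c) (g c) <= r.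
Proof.
move=> cl fc gc FA; rewrite leNgt; apply/negP => rd.
set d := mdist (f c) (g c) in rd *.
have e0 : 0 < (d - r) / 2 by rewrite divr_gt0 // subr_gt0.
have B1 : \forall t \near c, mdist (f c) (f t) < (d - r) / 2 by exact: metricType_numDomainType.cvgr_dist_lt.
have B2 : \forall t \near c, mdist (g c) (g t) < (d - r) / 2 by exact: metricType_numDomainType.cvgr_dist_lt.
have [t [/= At [Bt1 Bt2]]] := cl _ _ FA (filterI B1 B2).
have t1 := metric_triangle (f c) (f t) (g c).
have t2 := metric_triangle (f t) (g t) (g c).
have s := metric_sym (g c) (g t).
rewrite /= in Bt1 Bt2.
rewrite -/d in t1; lra.
Qed.

Lemma cluster_dist_ge (R : realType) (X : metricType R) (T : topologicalType)
  (F : set_system T) (c : T) (f g : T -> X) (r : R) :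
  cluster F c -> {for c, continuous f} -> {for c, continuous g} ->
  F [set t | r <= mdist (f t) (g t)] -> r <= mdist (f c) (g c).
Proof.
move=> cl fc gc FA; rewrite leNgt; apply/negP => rd.
set d := mdist (f c) (g c) in rd *.
have e0 : 0 < (r - d) / 2 by rewrite divr_gt0 // subr_gt0.
have B1 : \forall t \near c, mdist (f c) (f t) < (r - d) / 2 by exact: metricType_numDomainType.cvgr_dist_lt.
have B2 : \forall t \near c, mdist (g c) (g t) < (r - d) / 2 by exact: metricType_numDomainType.cvgr_dist_lt.
have [t [/= At [Bt1 Bt2]]] := cl _ _ FA (filterI B1 B2).
have t1 := metric_triangle (f t) (f c) (g t).
have t2 := metric_triangle (f c) (g c) (g t).
have s := metric_sym (f t) (f c).
rewrite /= in Bt1 Bt2.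
rewrite -/d in t2; lra.
Qed.

Lemma omega_seq_cont (R : realType) (L X : metricType R)
  (omega : L -> X -> X) (sig : nat -> L) :
  continuous (fun p : L * X => omega p.1 p.2) ->
  forall n, continuous (omega_seq omega sig n).
Proof.
move=> oc; elim=> [|n IH] x /=; first exact: cvg_id.
apply: (continuous_comp (f := fun x => (sig n, omega_seq omega sig n x))
          (g := fun p : L * X => omega p.1 p.2)); last exact: oc.
apply: cvg_pair; [exact: cvg_cst | exact: IH].
Qed.
Theorem mainTheorem10 (R : realType) (L X : metricType R)
  (omega : L -> X -> X) (eta : R) (sig : nat -> L) :
  compact [set: X] -> IFS omega -> expansive omega eta ->
  forall mu : R, 0 < mu ->
  exists N : nat, (0 < N)%N /\
    forall x y : X,
      (forall n : nat, (n <= N)%N ->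
         mdist (omega_seq omega sig n x) (omega_seq omega sig n y) <= eta) ->
      mdist x y < mu.
Proof.
move=> cX [_ oc] ex mu mu0.
apply: contrapT => nE.
have hp : forall N : nat, exists p : X * X,
    (forall n, (n <= N)%N ->
       mdist (omega_seq omega sig n p.1) (omega_seq omega sig n p.2) <= eta)
    /\ mu <= mdist p.1 p.2.
  move=> N; apply: contrapT => nP; apply: nE; exists N.+1; split => // x y H.
  rewrite ltNge; apply/negP => muxy; apply: nP; exists (x, y); split => //=.
  by move=> n nN; apply: H; rewrite (leq_trans nN).
have [p Hp] := choice hp.
have cXX : compact [set: X * X] by rewrite -setXTT; exact: compact_setX.
have [c [_ cc]] := cXX (p @ \oo) _ filterT.
have cont := @omega_seq_cont _ _ _ omega sig oc.
have fstc : {for c, continuous (@fst X X)} by exact: cvg_fst.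
have sndc : {for c, continuous (@snd X X)} by exact: cvg_snd.
have cn : forall n, {for c, continuous (omega_seq omega sig n \o fst)}
  by move=> n; apply: continuous_comp => //; exact: cont.
have cn' : forall n, {for c, continuous (omega_seq omega sig n \o snd)}
  by move=> n; apply: continuous_comp => //; exact: cont.
have Hc : forall n, mdist (omega_seq omega sig n c.1) (omega_seq omega sig n c.2) <= eta.
  move=> n; apply: (@cluster_dist_le _ _ _ _ c _ _ eta cc (cn n) (cn' n)).
  by exists n => // N /= nN; apply: (proj1 (Hp N)).
have Hmu : mu <= mdist c.1 c.2.
  apply: (@cluster_dist_ge _ _ _ _ c _ _ mu cc fstc sndc).
  by exists 0%N => // N /= _; apply: (proj2 (Hp N)).
have := ex sig _ _ Hc => e; move: Hmu; rewrite e mdistxx; lra.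
Qed.
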